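(* For every $n\ge 4$, $\beta(P_{2\infty}\,\Box\, K_n)=n-1$, and $S=\{(0,0),(1,1),(2,2),\dots,(n-2,n-2)\}$ is a metric basis of $P_{2\infty}\,\Box\, K_n$.
   Context: $P_{2\infty}$ has vertex set $\mathbb Z$ with $i,j$ adjacent iff $|i-j|=1$. $K_n$ is the complete graph on vertex set $\{0,1,\dots,n-1\}$. The cartesian product $G\Box H$ has vertex set $V(G)\times V(H)$, where $(a,v)$ is adjacent to $(b,w)$ iff either $a=b$ and $vw\in E(H)$, or $v=w$ and $ab\in E(G)$. A vertex $x$ resolves $u,v$ if $d(u,x)\ne d(v,x)$ (shortest-path distance); a resolving set is a set of vertices resolving every pair of distinct vertices; $\beta$ is the minimum cardinality of a resolving set ($\infty$ if none is finite), and a metric basis is a resolving set of cardinality $\beta$. *)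

(* Defs.v *)
From mathcomp Require Import all_boot all_order all_algebra.
Set Implicit Arguments. Unset Strict Implicit. Unset Printing Implicit Defensive.

Definition P2inf_adj (i j : int) : Prop := (i = j + 1)%R \/ (j = i + 1)%R.

Definition Kn_adj (n : nat) (v w : 'I_n) : Prop := v <> w.

Definition cartesian (A B : Type) (g : A -> A -> Prop) (h : B -> B -> Prop)
  (x y : A * B) : Prop :=
  (x.1 = y.1 /\ h x.2 y.2) \/ (x.2 = y.2 /\ g x.1 y.1).

Inductive walk (V : Type) (adj : V -> V -> Prop) : V -> V -> nat -> Prop :=
| walk_nil x : walk adj x x 0
| walk_cons x y z k : adj x y -> walk adj y z k -> walk adj x z k.+1.

Definition is_dist (V : Type) (adj : V -> V -> Prop) (u v : V) (k : nat) : Prop :=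
  walk adj u v k /\ forall j, j < k -> ~ walk adj u v j.

Definition resolves (V : Type) (adj : V -> V -> Prop) (x u v : V) : Prop :=
  exists k1 k2, [/\ is_dist adj u x k1, is_dist adj v x k2 & k1 <> k2].

Definition resolving (V : eqType) (adj : V -> V -> Prop) (W : seq V) : Prop :=
  forall u v : V, u <> v -> exists2 x, x \in W & resolves adj x u v.

(* beta(G) = k (finite): some resolving set of cardinality k, and every
   finite resolving set has cardinality >= k (infinite ones trivially do). *)
Definition metric_dim_is (V : eqType) (adj : V -> V -> Prop) (k : nat) : Prop :=
  (exists W : seq V, [/\ uniq W, size W = k & resolving adj W]) /\
  (forall W : seq V, uniq W -> resolving adj W -> k <= size W).

Definition metric_basis (V : eqType) (adj : V -> V -> Prop) (W : seq V) : Prop :=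
  [/\ uniq W, resolving adj W &
      forall W' : seq V, uniq W' -> resolving adj W' -> size W <= size W'].

Definition PKn_adj (n : nat) : int * 'I_n -> int * 'I_n -> Prop :=
  cartesian P2inf_adj (@Kn_adj n).

Definition diagS (n : nat) : seq (int * 'I_n) :=
  [seq (Posz (nat_of_ord i), i) | i <- enum 'I_n & nat_of_ord i < n.-1].

(* Main.v *)
Require Import Defs.
From Stdlib Require Import ZArith Lia Classical.
From mathcomp Require Import all_boot all_order all_algebra.
Import GRing.Theory.
Definition toZ (x : int) : Z := match x with Posz n => Z.of_nat n | Negz n => Z.pred (Z.opp (Z.of_nat n)) end.
Lemma toZ_add x y : toZ (x + y)%R = Z.add (toZ x) (toZ y).
Proof.
case: x => m; case: y => n; rewrite /GRing.add /= /intZmod.addz /=; try case: ifP => /ltP H; rewrite /= ?Nat2Z.inj_add ?Nat2Z.inj_sub; try lia.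
all: rewrite -Pos2Z.opp_pos Pos2Z.inj_add Zpos_P_of_succ_nat Nat2Z.inj_add; lia.
Qed.
Lemma toZ_opp x : toZ (- x)%R = Z.opp (toZ x).
Proof. case: x => [[|m]|m] /=; rewrite /GRing.opp /= /intZmod.oppz /=; lia. Qed.
Lemma toZ_abs x : Z.of_nat `|x|%N = Z.abs (toZ x).
Proof. case: x => m /=; lia. Qed.
Lemma toZ_inj : injective toZ.
Proof. case=> m [] n /= H; f_equal; lia. Qed.
Lemma toZ_dist x y : Z.of_nat `|x - y|%N = Z.abs (Z.sub (toZ x) (toZ y)).
Proof. by rewrite toZ_abs toZ_add toZ_opp. Qed.
Lemma toZ_one : toZ 1%R = Zpos xH. Proof. by []. Qed.
Lemma toZ_nat (k : nat) : toZ (Posz k) = Z.of_nat k. Proof. by []. Qed.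

Section G.
Variable n : nat.
Definition D (x y : int * 'I_n) : nat := (`|x.1 - y.1|%N + (x.2 != y.2))%N.

Lemma dist_step (a a' c : int) : P2inf_adj a a' -> (`|a - c| <= `|a' - c| + 1)%N.
Proof.
move=> H; apply/leP; apply Nat2Z.inj_le; rewrite Nat2Z.inj_add !toZ_dist.
case: H => ->; rewrite toZ_add /=; lia.
Qed.

Lemma walk_lb x y k : walk (@PKn_adj n) x y k -> D x y <= k.
Proof.
elim=> {x y k} [x|x y z k Hxy _ IH]; first by rewrite /D subrr eqxx.
apply: leq_trans _ (IH : D y z < k.+1); rewrite /D -addn1 -addnA.
case: Hxy => [[E1 E2]|[E2 E1]].
  by rewrite E1 leq_add2l; case: (x.2 != z.2); case: (y.2 != z.2).
rewrite E2 [X in _ <= X]addnCA [X in X <= _]addnC leq_add2l; exact: dist_step.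
Qed.

Lemma line m : forall (a b : int) (v : 'I_n), `|a - b|%N = m -> walk (@PKn_adj n) (a, v) (b, v) m.
Proof.
elim: m => [|m IH] a b v H.
  suff -> : a = b by constructor.
  apply: toZ_inj; move/(f_equal Z.of_nat): H; rewrite toZ_dist /=; lia.
have HZ := f_equal Z.of_nat H; rewrite toZ_dist in HZ.
case: (Z.lt_ge_cases (toZ a) (toZ b)) => Hab.
  apply: (@walk_cons _ _ _ ((a + 1)%R, v)); first by right; split=> //; right.
  apply: IH; apply: Nat2Z.inj; rewrite toZ_dist toZ_add toZ_one; lia.
apply: (@walk_cons _ _ _ ((a - 1)%R, v)); first by right; split=> //; left; rewrite /= subrK.
apply: IH; apply: Nat2Z.inj; rewrite toZ_dist toZ_add toZ_opp toZ_one; lia.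
Qed.

Lemma walk_D x y : walk (@PKn_adj n) x y (D x y).
Proof.
case: x => a v; case: y => b w; rewrite /D /=.
case: eqP => [->|Hvw]; first by rewrite addn0; apply: line.
rewrite addn1; apply: (@walk_cons _ _ _ (a, w)); first by left.
exact: line.
Qed.

Lemma is_distE x y k : is_dist (@PKn_adj n) x y k -> k = D x y.
Proof.
case=> Hw Hmin; apply/eqP; rewrite eqn_leq walk_lb // andbT.
by rewrite leqNgt; apply/negP => /Hmin; apply; apply: walk_D.
Qed.

Lemma resolvesD x u v : resolves (@PKn_adj n) x u v <-> D u x <> D v x.
Proof.
split.
  by case=> k1 [k2 [/is_distE -> /is_distE ->]].
move=> H; exists (D u x), (D v x); split=> //; split; try exact: walk_D;
  by move=> j Hj /walk_lb; rewrite leqNgt Hj.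
Qed.
End G.
Lemma keyZ (a b : int) (v w : nat) : a <> b ->
  (forall k, k < 3 -> `|a - Posz k|%N + (v != k) = `|b - Posz k|%N + (w != k)) -> False.
Proof.
move=> Hab H; have Hz : toZ a <> toZ b by move/toZ_inj.
move: (H 0 isT) (H 1 isT) (H 2 isT).
move=> /(f_equal Z.of_nat) E0 /(f_equal Z.of_nat) E1 /(f_equal Z.of_nat) E2.
rewrite !Nat2Z.inj_add !toZ_dist !toZ_nat in E0 E1 E2.
move: E0 E1 E2; do 6 (case: eqP => ?); rewrite /=; lia.
Qed.

Lemma keyEq (v w m : nat) : v <= m -> w <= m ->
  (forall k, k < m -> (v != k) = (w != k)) -> v = w.
Proof.
move=> hv hw H.
case: (ltnP v m) => hv'.
  by move: (H v hv'); rewrite eqxx /= => /esym/negbFE/eqP.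
case: (ltnP w m) => hw'.
  by move: (H w hw'); rewrite eqxx /= => /negbFE/eqP.
by apply/eqP; rewrite eqn_leq (leq_trans hv hw') (leq_trans hw hv').
Qed.

Lemma diagS_size n : size (diagS n) = n.-1.
Proof.
rewrite /diagS size_map size_filter.
rewrite -[count _ _](@count_map _ _ val (fun k => k < n.-1)) val_enum_ord.
case: n => [|m] //.
rewrite (_ : iota 0 m.+1 = iota 0 m ++ iota m 1); last by rewrite -iotaD addn1.
rewrite count_cat /= ltnn !addn0.
rewrite (eq_in_count (a2 := predT)) ?count_predT ?size_iota //.
by move=> k; rewrite mem_iota.
Qed.

Lemma diagS_uniq n : uniq (diagS n).
Proof.
rewrite /diagS map_inj_uniq; first exact: filter_uniq (enum_uniq _).
by move=> i j [_].
Qed.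

Lemma lb n (W : seq (int * 'I_n)) : resolving (@PKn_adj n) W -> n.-1 <= size W.
Proof.
move=> HW; set C := [seq x.2 | x <- W].
have claim : forall v w : 'I_n, v \notin C -> w \notin C -> v = w.
  move=> v w hv hw; apply/eqP/negPn/negP => hvw.
  have [x xW] := HW (Posz 0, v) (Posz 0, w) (fun E => ltac:(case: E => E; by rewrite E eqxx in hvw)).
  move/resolvesD; rewrite /D /=.
  have xv : v != x.2 by apply: contraNneq hv => ->; exact: map_f.
  have xw : w != x.2 by apply: contraNneq hw => ->; exact: map_f.
  by rewrite xv xw.
pose A := [pred x | x \in C].
have h1 : #|[predC A]| <= 1.
  apply/card_le1_eqP => v w; rewrite !inE => hv hw; exact: claim.
have := cardC A; rewrite card_ord => E.
have h2 : #|A| <= size C by exact: card_size C.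
move: h2; rewrite size_map => h2.
have h3 : #|A| + #|[predC A]| <= #|A| + 1 by rewrite leq_add2l.
rewrite E in h3.
apply: leq_trans h2; by rewrite -subn1 leq_subLR addnC.
Qed.

Lemma ub n (hn : 4 <= n) : resolving (@PKn_adj n) (diagS n).
Proof.
move=> [a v] [b w] Huv; apply: NNPP => Hno.
have H : forall k (hk : k < n.-1),
    D n (a, v) (Posz k, Ordinal (leq_trans hk (leq_pred n))) =
    D n (b, w) (Posz k, Ordinal (leq_trans hk (leq_pred n))).
  move=> k hk; apply: NNPP => hne; apply: Hno.
  exists (Posz k, Ordinal (leq_trans hk (leq_pred n))); last by apply/resolvesD.
  apply/mapP; exists (Ordinal (leq_trans hk (leq_pred n))) => //.
  by rewrite mem_filter mem_enum andbT.
have H' : forall k, k < n.-1 ->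
    (`|a - Posz k|%N + (val v != k) = `|b - Posz k|%N + (val w != k))%N.
  by move=> k hk; move: (H k hk); rewrite /D /= -!val_eqE.
have hn1 : 3 <= n.-1 by apply/leP; move/leP: hn; lia.
case: (eqVneq a b) => [Eab|Nab].
  subst b; exfalso; apply: Huv; suff -> : v = w by []; apply: val_inj.
  have hv : val v <= n.-1 by rewrite -ltnS (ltn_predK hn) ltn_ord.
  have hw : val w <= n.-1 by rewrite -ltnS (ltn_predK hn) ltn_ord.
  apply: (keyEq _ _ _ hv hw) => k hk.
  move: (H' k hk) => /addnI; by case: (_ != k); case: (_ != k).
exfalso; apply: (@keyZ a b (val v) (val w)); first exact/eqP.
by move=> k hk; apply: H'; apply: leq_trans hk _.
Qed.

Theorem proposition9 (n : nat) (hn : 4 <= n) :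
  metric_dim_is (@PKn_adj n) (n - 1) /\ metric_basis (@PKn_adj n) (diagS n).
Proof.
split; first split.
- exists (diagS n); split; [exact: diagS_uniq| by rewrite diagS_size subn1 | exact: ub].
- by move=> W _ HW; rewrite subn1; exact: lb.
split; [exact: diagS_uniq | exact: ub |].
by move=> W _ HW; rewrite diagS_size; exact: lb.
Qed.
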